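(* Let $P\in\Delta_{\mathcal{T},\mathcal{X},\mathcal{Y}}$ and suppose $|\mathcal{T}|<\min\{|\mathcal{X}|,|\mathcal{Y}|\}$. If there exists a maximizer of $H_Q(T\mid X,Y)$ over $Q\in\Delta_P$ with full support $\mathcal{T}\times\mathcal{X}\times\mathcal{Y}$, then the maximizer is not unique.
   Context: $T,X,Y$ are random variables with finite state spaces $\mathcal{T},\mathcal{X},\mathcal{Y}$; $\Delta_{\mathcal{T},\mathcal{X},\mathcal{Y}}$ is the set of all joint distributions on $\mathcal{T}\times\mathcal{X}\times\mathcal{Y}$. For $P\in\Delta_{\mathcal{T},\mathcal{X},\mathcal{Y}}$, $\Delta_P=\{Q\in\Delta_{\mathcal{T},\mathcal{X},\mathcal{Y}}: Q(X=x,T=t)=P(X=x,T=t),\ Q(Y=y,T=t)=P(Y=y,T=t)\ \forall x,y,t\}$. $H_Q(T\mid X,Y)$ is the conditional entropy under $Q$. *)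

(* Defs.v *)
From HB Require Import structures.
From mathcomp Require Import all_boot.
From Stdlib Require Import Reals.
Set Implicit Arguments. Unset Strict Implicit. Unset Printing Implicit Defensive.

Section Defs.
Variables (T X Y : finType).

Definition jdist := T -> X -> Y -> R.

Definition rsum (I : finType) (F : I -> R) : R := \big[Rplus/R0]_(i : I) F i.

Definition is_dist (Q : jdist) : Prop :=
  (forall t x y, (0 <= Q t x y)%R) /\
  rsum (fun t => rsum (fun x => rsum (fun y => Q t x y))) = 1%R.

Definition margTX (Q : jdist) (t : T) (x : X) : R := rsum (fun y => Q t x y).
Definition margTY (Q : jdist) (t : T) (y : Y) : R := rsum (fun x => Q t x y).
Definition margXY (Q : jdist) (x : X) (y : Y) : R := rsum (fun t => Q t x y).

Definition DeltaP (P Q : jdist) : Prop :=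
  is_dist Q /\
  (forall t x, margTX Q t x = margTX P t x) /\
  (forall t y, margTY Q t y = margTY P t y).

Definition condEntTXY (Q : jdist) : R :=
  (- rsum (fun t => rsum (fun x => rsum (fun y =>
       if Req_EM_T (Q t x y) 0 then 0%R
       else (Q t x y * ln (Q t x y / margXY Q x y))%R))))%R.

Definition is_maximizer (P Q : jdist) : Prop :=
  DeltaP P Q /\ forall Q', DeltaP P Q' -> (condEntTXY Q' <= condEntTXY Q)%R.

Definition full_support (Q : jdist) : Prop := forall t x y, (0 < Q t x y)%R.

End Defs.

(* Main.v *)
Set Warnings "-notation-overridden,-ambiguous-paths".
Require Import Defs.
From HB Require Import structures.
From mathcomp Require Import all_boot.
From Stdlib Require Import Reals.
Set Warnings "-notation-overridden,-ambiguous-paths".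
From mathcomp Require Import all_order all_algebra.
From mathcomp Require Import Rstruct.
From Coquelicot Require Import Coquelicot.
From Stdlib Require Import Lra FunctionalExtensionality.
Set Implicit Arguments. Unset Strict Implicit. Unset Printing Implicit Defensive.
Section K.
Local Open Scope ring_scope.
Variables (F : fieldType) (I J : finType).
Lemma kernel_ex (A : J -> I -> F) : leq (#|J|).+1 #|I| ->
  exists u : I -> F, (exists i, u i != 0) /\ forall j, (\sum_i u i * A j i = 0).
Proof.
move=> hJI.
pose M : 'M[F]_(#|I|, #|J|) := \matrix_(i, j) A (enum_val j) (enum_val i).
have rk : leq 1 (\rank (kermx M)).
  rewrite mxrank_ker subn_gt0.
  exact: leq_ltn_trans (rank_leq_col M) hJI.
have [k hk] : exists k, row k (kermx M) != 0.
  apply/existsP; move: rk; apply: contraLR; rewrite negb_exists => /forallP h.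
  have -> : kermx M = 0 by apply/row_matrixP => k; rewrite row0; exact/eqP/negPn/h.
  by rewrite mxrank0.
set w := row k (kermx M) in hk.
have wM : w *m M = 0 by apply/eqP; rewrite -sub_kermx row_sub.
exists (fun i => w 0 (enum_rank i)); split.
  have [j hj] : exists j, w 0 j != 0.
    apply/existsP; move: hk; apply: contraLR; rewrite negb_exists => /forallP h.
    rewrite negbK; apply/eqP/rowP => j; have := h j; rewrite negbK => /eqP.
    by rewrite !mxE.
  by exists (enum_val j); rewrite (enum_valK j).
move=> j.
have := congr1 (fun m : 'M[F]_(1, #|J|) => m 0 (enum_rank j)) wM; rewrite /= !mxE => E; rewrite -[in RHS]E.
rewrite (reindex enum_rank) /=; last first.
  by exists enum_val => x _; rewrite ?enum_valK ?enum_rankK.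
by apply: eq_bigr => i _; rewrite !mxE !enum_rankK.
Qed.
End K.
Local Open Scope R_scope.
Lemma phi_deriv (q a d e : R) : 0 < q -> 0 < a ->
  derivable_pt_lim (fun s => (q + s * d) * ln ((q + s * d) / (a + s * e))) 0
    (d * ln (q / a) + d - q * e / a).
Proof.
move=> hq ha; apply is_derive_Reals.
auto_derive; rewrite ?Rmult_0_l ?Rplus_0_r.
  split; [lra| split; [|exact I]].
  by apply Rdiv_lt_0_compat.
rewrite /Rdiv; field; lra.
Qed.

Lemma rsum_deriv (I : finType) (f : I -> R -> R) (f' : I -> R) :
  (forall i, derivable_pt_lim (f i) 0 (f' i)) ->
  derivable_pt_lim (fun s => rsum (fun i => f i s)) 0 (rsum f').
Proof.
move=> hf; rewrite /rsum.
elim: (index_enum I) => [|i l IH].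
  have -> : (fun s => \big[Rplus/R0]_(i <- [::]) f i s) = fun _ => R0.
    by apply: functional_extensionality => s; rewrite big_nil.
  rewrite big_nil; exact: derivable_pt_lim_const.
have -> : (fun s => \big[Rplus/R0]_(j <- i :: l) f j s) =
   (fun s => f i s + \big[Rplus/R0]_(j <- l) f j s).
  by apply: functional_extensionality => s; rewrite big_cons.
rewrite big_cons; exact: derivable_pt_lim_plus (hf i) IH.
Qed.

Lemma RplusA' : associative Rplus. Proof. by move=> x y z; rewrite Rplus_assoc. Qed.
HB.instance Definition _ := Monoid.isComLaw.Build R R0 Rplus RplusA' Rplus_comm Rplus_0_l.
HB.instance Definition _ := Monoid.isMulLaw.Build R R0 Rmult Rmult_0_l Rmult_0_r.
HB.instance Definition _ := Monoid.isAddLaw.Build R Rmult Rplus Rmult_plus_distr_r Rmult_plus_distr_l.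

Section RS.
Variable I : finType.
Implicit Types F G : I -> R.

Lemma rsum_ext F G : (forall i, F i = G i) -> rsum F = rsum G.
Proof. by move=> h; apply: eq_bigr => i _. Qed.

Lemma rsum_plus F G : rsum (fun i => F i + G i) = rsum F + rsum G.
Proof. exact: big_split. Qed.

Lemma rsum_scal c F : rsum (fun i => c * F i) = c * rsum F.
Proof. by rewrite /rsum big_distrr. Qed.

Lemma rsum_opp F : rsum (fun i => - F i) = - rsum F.
Proof.
transitivity (rsum (fun i => -1 * F i)); first by apply: rsum_ext => i; ring.
rewrite rsum_scal; ring.
Qed.

Lemma rsum_minus F G : rsum (fun i => F i - G i) = rsum F - rsum G.
Proof. by rewrite /Rminus -rsum_opp -rsum_plus. Qed.

Lemma rsum_ge0 F : (forall i, 0 <= F i) -> 0 <= rsum F.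
Proof.
move=> h; rewrite /rsum; apply: (big_ind (fun x => 0 <= x)) => //.
  exact: Rle_refl.
by move=> x y hx hy; lra.
Qed.

Lemma rsum_term F i0 : (forall i, 0 <= F i) -> F i0 <= rsum F.
Proof.
move=> h; rewrite /rsum (bigD1 i0) //=.
have : 0 <= \big[Rplus/R0]_(i | i != i0) F i.
  apply: (big_ind (fun x => 0 <= x)) => //; first exact: Rle_refl.
  by move=> x y hx hy; lra.
lra.
Qed.

Lemma rsum_pt F i0 : rsum (fun i => (if i == i0 then 1 else 0) * F i) = F i0.
Proof.
rewrite /rsum (bigD1 i0) //= eqxx big1 ?Rmult_1_l ?Rplus_0_r //.
by move=> i /negbTE ->; rewrite Rmult_0_l.
Qed.

Lemma rsum_pt1 (i0 : I) : rsum (fun i : I => if i == i0 then 1 else 0) = 1.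
Proof.
rewrite -[RHS](@rsum_pt (fun _ => 1) i0); apply: rsum_ext => i; ring.
Qed.

Lemma rsum_0 : @rsum I (fun _ => 0) = 0.
Proof. by rewrite /rsum big1. Qed.

End RS.

Lemma rsum_exch (I J : finType) (F : I -> J -> R) :
  rsum (fun i => rsum (fun j => F i j)) = rsum (fun j => rsum (fun i => F i j)).
Proof. exact: exchange_big. Qed.

Section Main.
Variables (T X Y : finType).
Notation jd := (jdist T X Y).
Definition rs3 (F : T -> X -> Y -> R) :=
  rsum (fun t => rsum (fun x => rsum (fun y => F t x y))).
Definition pert (Q D : jd) (s : R) : jd := fun t x y => Q t x y + s * D t x y.

Lemma rs3_term F t x y : (forall t x y, 0 <= F t x y) -> F t x y <= rs3 F.
Proof.
move=> h; rewrite /rs3.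
apply Rle_trans with (rsum (fun x => rsum (fun y => F t x y))); last first.
  apply: (rsum_term (F:=fun t => rsum (fun x => rsum (fun y => F t x y))) t).
  by move=> t'; apply: rsum_ge0 => x'; apply: rsum_ge0.
apply Rle_trans with (rsum (fun y => F t x y)); last first.
  apply: (rsum_term (F:=fun x => rsum (fun y => F t x y)) x).
  by move=> x'; apply: rsum_ge0.
exact: (rsum_term (F:=fun y => F t x y)).
Qed.

Lemma rs3_ge0 F : (forall t x y, 0 <= F t x y) -> 0 <= rs3 F.
Proof. by move=> h; do 3! apply: rsum_ge0 => ?. Qed.

Lemma pos_lb (Q : jd) : full_support Q -> exists e, 0 < e /\ forall t x y, e <= Q t x y.
Proof.
move=> hQ; set S := rs3 (fun t x y => / Q t x y).
have hS : 0 <= S by apply: rs3_ge0 => t x y; left; apply: Rinv_0_lt_compat.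
exists (/ (1 + S)); split; first by apply: Rinv_0_lt_compat; lra.
move=> t x y.
have h1 : / Q t x y <= 1 + S.
  have := rs3_term (F:=fun t x y => / Q t x y) t x y.
  rewrite -/S => h; suff : / Q t x y <= S by lra.
  by apply: h => t' x' y'; left; apply: Rinv_0_lt_compat.
have := Rinv_le_contravar _ _ (Rinv_0_lt_compat _ (hQ t x y)) h1.
by rewrite Rinv_inv.
Qed.

Lemma abs_bound (D : jd) : exists K, 0 < K /\ forall t x y, Rabs (D t x y) <= K.
Proof.
set S := rs3 (fun t x y => Rabs (D t x y)).
have hS : 0 <= S by apply: rs3_ge0 => t x y; apply: Rabs_pos.
exists (1 + S); split; first lra.
move=> t x y; have := rs3_term (F:=fun t x y => Rabs (D t x y)) t x y.
rewrite -/S => h; suff : Rabs (D t x y) <= S by lra.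
by apply: h => t' x' y'; apply: Rabs_pos.
Qed.

Lemma margTX_pert Q D s t x : margTX (pert Q D s) t x = margTX Q t x + s * margTX D t x.
Proof. by rewrite /margTX /pert rsum_plus rsum_scal. Qed.
Lemma margTY_pert Q D s t y : margTY (pert Q D s) t y = margTY Q t y + s * margTY D t y.
Proof. by rewrite /margTY /pert rsum_plus rsum_scal. Qed.
Lemma margXY_pert Q D s x y : margXY (pert Q D s) x y = margXY Q x y + s * margXY D x y.
Proof. by rewrite /margXY /pert rsum_plus rsum_scal. Qed.

Definition zmarg (D : jd) :=
  (forall t x, margTX D t x = 0) /\ (forall t y, margTY D t y = 0).

Lemma perturb (P Q D : jd) : DeltaP P Q -> full_support Q -> zmarg D ->
  exists d, 0 < d /\ forall s, Rabs s < d ->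
    DeltaP P (pert Q D s) /\ full_support (pert Q D s).
Proof.
move=> [[Q0 Q1] [QTX QTY]] hQ [DTX DTY].
have [e [he hle]] := pos_lb hQ.
have [K [hK hKb]] := abs_bound D.
exists (e / K); split; first exact: Rdiv_lt_0_compat.
move=> s hs.
have hpos : full_support (pert Q D s).
  move=> t x y; rewrite /pert.
  have h1 : Rabs (s * D t x y) < e.
    rewrite Rabs_mult.
    have h2 : Rabs s * Rabs (D t x y) <= Rabs s * K.
      by apply: Rmult_le_compat_l; [apply: Rabs_pos | apply: hKb].
    have h3 : Rabs s * K < e / K * K by apply: Rmult_lt_compat_r.
    have h4 : e / K * K = e by field; lra.
    lra.
  have := Rle_abs (- (s * D t x y)); rewrite Rabs_Ropp.
  have := hle t x y; lra.
split=> //; split; last split.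
- split; first by move=> t x y; left; apply: hpos.
  rewrite -Q1; rewrite /pert.
  transitivity (rsum (fun t => rsum (fun x => margTX Q t x + s * margTX D t x))).
    by apply: rsum_ext => t; apply: rsum_ext => x; rewrite -margTX_pert.
  transitivity (rsum (fun t => rsum (fun x => margTX Q t x))).
    by apply: rsum_ext => t; apply: rsum_ext => x; rewrite DTX; ring.
  by [].
- by move=> t x; rewrite margTX_pert DTX QTX; ring.
- by move=> t y; rewrite margTY_pert DTY QTY; ring.
Qed.

Lemma condEnt_pos (Q : jd) : full_support Q ->
  condEntTXY Q = - rs3 (fun t x y => Q t x y * ln (Q t x y / margXY Q x y)).
Proof.
move=> hQ; rewrite /condEntTXY /rs3; f_equal.
apply: rsum_ext => t; apply: rsum_ext => x; apply: rsum_ext => y.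
destruct (Req_dec_T (Q t x y) 0) as [h|h]; last by []. have := hQ t x y; lra.
Qed.

Lemma T_inhab (Q : jd) : is_dist Q -> exists t : T, True.
Proof.
move=> [_ h1]; case: (pickP (@predT T)) => [t _|h]; first by exists t.
exfalso; move: h1; rewrite /rsum big_pred0 //; lra.
Qed.

End Main.

Section Stat.
Variables (T X Y : finType).
Notation jd := (jdist T X Y).

Lemma rs3_ext (F G : T -> X -> Y -> R) :
  (forall t x y, F t x y = G t x y) -> rs3 F = rs3 G.
Proof.
move=> h; rewrite /rs3; apply: rsum_ext => t; apply: rsum_ext => x.
by apply: rsum_ext => y.
Qed.

Lemma rs3_plus (F G : T -> X -> Y -> R) :
  rs3 (fun t x y => F t x y + G t x y) = rs3 F + rs3 G.
Proof.
rewrite /rs3 -rsum_plus; apply: rsum_ext => t; rewrite -rsum_plus.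
by apply: rsum_ext => x; rewrite rsum_plus.
Qed.

Lemma rs3_scal c (F : T -> X -> Y -> R) :
  rs3 (fun t x y => c * F t x y) = c * rs3 F.
Proof.
rewrite /rs3 -rsum_scal; apply: rsum_ext => t; rewrite -rsum_scal.
by apply: rsum_ext => x; rewrite rsum_scal.
Qed.

Lemma rs3_exch (F : T -> X -> Y -> R) :
  rs3 F = rsum (fun x => rsum (fun y => rsum (fun t => F t x y))).
Proof.
rewrite /rs3 rsum_exch; apply: rsum_ext => x; exact: rsum_exch.
Qed.

Lemma margXY_pos (Q : jd) (t : T) (x : X) (y : Y) : full_support Q -> 0 < margXY Q x y.
Proof.
move=> hQ; apply: Rlt_le_trans (hQ t x y) _.
by apply: (rsum_term (F:=fun t => Q t x y)) => t'; left.
Qed.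

Lemma stat (P Q D : jd) : is_maximizer P Q -> full_support Q -> zmarg D ->
  rs3 (fun t x y => D t x y * ln (Q t x y / margXY Q x y)) = 0.
Proof.
move=> [hQP hmax] hQ hD.
have [t0 _] := T_inhab hQP.1.
have hm x y : 0 < margXY Q x y := margXY_pos t0 x y hQ.
have [d [hd hpert]] := perturb hQP hQ hD.
set G := fun s => - rs3 (fun t x y => (Q t x y + s * D t x y) *
   ln ((Q t x y + s * D t x y) / (margXY Q x y + s * margXY D x y))).
have hG : forall s, Rabs s < d -> G s = condEntTXY (pert Q D s).
  move=> s hs; rewrite condEnt_pos; last exact: (hpert s hs).2.
  rewrite /G /rs3; f_equal; apply: rsum_ext => t; apply: rsum_ext => x.
  by apply: rsum_ext => y; rewrite margXY_pert.
have hQ0 : pert Q D 0 = Q.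
  apply: functional_extensionality => t; apply: functional_extensionality => x.
  apply: functional_extensionality => y; rewrite /pert; ring.
have hG0 : G 0 = condEntTXY Q by rewrite hG ?hQ0 // Rabs_R0.
have hder : derivable_pt_lim G 0 (- rs3 (fun t x y =>
    D t x y * ln (Q t x y / margXY Q x y) + D t x y
    - Q t x y * margXY D x y / margXY Q x y)).
  have H : derivable_pt_lim (fun s => rs3 (fun t x y => (Q t x y + s * D t x y) *
     ln ((Q t x y + s * D t x y) / (margXY Q x y + s * margXY D x y)))) 0
     (rs3 (fun t x y =>
    D t x y * ln (Q t x y / margXY Q x y) + D t x y
    - Q t x y * margXY D x y / margXY Q x y)).
    rewrite /rs3.
    apply: (rsum_deriv (f := fun t s => rsum (fun x => rsum (fun y =>
      (Q t x y + s * D t x y) *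
     ln ((Q t x y + s * D t x y) / (margXY Q x y + s * margXY D x y)))))) => t.
    apply: (rsum_deriv (f := fun x s => rsum (fun y =>
      (Q t x y + s * D t x y) *
     ln ((Q t x y + s * D t x y) / (margXY Q x y + s * margXY D x y))))) => x.
    apply: (rsum_deriv (f := fun y s =>
      (Q t x y + s * D t x y) *
     ln ((Q t x y + s * D t x y) / (margXY Q x y + s * margXY D x y)))) => y.
    exact: phi_deriv.
  exact: derivable_pt_lim_opp H.
have := deriv_maximum G (- d) d 0 (exist _ _ hder) ltac:(lra) ltac:(lra).
rewrite /derive_pt /= => Hmax.
have {Hmax}Hz := Hmax (fun s h1 h2 => ltac:(
  rewrite hG0 hG; [apply: hmax; apply: (hpert s _).1|]; apply: Rabs_def1; lra)).
have hz : rs3 (fun t x y => D t x y - Q t x y * margXY D x y / margXY Q x y) = 0.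
  rewrite rs3_exch -[RHS](@rsum_0 X); apply: rsum_ext => x.
  rewrite -[RHS](@rsum_0 Y); apply: rsum_ext => y.
  rewrite rsum_minus.
  transitivity (margXY D x y - (margXY D x y / margXY Q x y) * margXY Q x y).
    rewrite /margXY -rsum_scal; f_equal; apply: rsum_ext => t.
    by rewrite /Rdiv; ring.
  by field; have := hm x y; lra.
have hs : rs3 (fun t x y => D t x y * ln (Q t x y / margXY Q x y) + D t x y
    - Q t x y * margXY D x y / margXY Q x y) =
    rs3 (fun t x y => D t x y * ln (Q t x y / margXY Q x y)) +
    rs3 (fun t x y => D t x y - Q t x y * margXY D x y / margXY Q x y).
  rewrite -rs3_plus /rs3; apply: rsum_ext => t; apply: rsum_ext => x.
  by apply: rsum_ext => y; ring.
move: Hz; rewrite hs hz; lra.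
Qed.
End Stat.

Notation ind i0 i := (if i == i0 then 1 else 0).

Lemma rsum_dif (I : finType) (a b : I) (F : I -> R) :
  rsum (fun i => (ind a i - ind b i) * F i) = F a - F b.
Proof.
transitivity (rsum (fun i => ind a i * F i) - rsum (fun i => ind b i * F i)).
  by rewrite -rsum_minus; apply: rsum_ext => i; ring.
by rewrite !rsum_pt.
Qed.

Lemma rsum_dif1 (I : finType) (a b : I) :
  rsum (fun i => ind a i - ind b i) = 0.
Proof.
have /= h := rsum_dif a b (fun _ => 1).
transitivity (1 - 1); last ring.
by rewrite -h; apply: rsum_ext => i; ring.
Qed.

Section Rect.
Variables (T X Y : finType).
Notation jd := (jdist T X Y).

Lemma rect (P Q : jd) : is_maximizer P Q -> full_support Q ->
  forall t x1 x2 y1 y2,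
  ln (Q t x1 y1 / margXY Q x1 y1) + ln (Q t x2 y2 / margXY Q x2 y2) =
  ln (Q t x1 y2 / margXY Q x1 y2) + ln (Q t x2 y1 / margXY Q x2 y1).
Proof.
move=> hmax hQ t x1 x2 y1 y2.
set L := fun t x y => ln (Q t x y / margXY Q x y).
pose D : jd := fun t' x' y' => ind t t' * ((ind x1 x' - ind x2 x') * (ind y1 y' - ind y2 y')).
have hz : zmarg D.
  split=> [t' x'|t' y'].
    rewrite /margTX /D.
    transitivity (rsum (fun y => (ind t t' * (ind x1 x' - ind x2 x')) * (ind y1 y - ind y2 y))).
      by apply: rsum_ext => y; ring.
    by rewrite rsum_scal rsum_dif1; ring.
  rewrite /margTY /D.
  transitivity (rsum (fun x => (ind t t' * (ind y1 y' - ind y2 y')) * (ind x1 x - ind x2 x))).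
    by apply: rsum_ext => x; ring.
  by rewrite rsum_scal rsum_dif1; ring.
have := stat hmax hQ hz; rewrite /rs3.
have -> : rsum (fun t' => rsum (fun x => rsum (fun y =>
     D t' x y * ln (Q t' x y / margXY Q x y)))) =
   rsum (fun t' => ind t t' * rsum (fun x => (ind x1 x - ind x2 x) *
     rsum (fun y => (ind y1 y - ind y2 y) * L t' x y))).
  apply: rsum_ext => t'; rewrite -rsum_scal; apply: rsum_ext => x.
  rewrite -!rsum_scal; apply: rsum_ext => y; rewrite /D /L; ring.
rewrite rsum_pt rsum_dif !rsum_dif /L; lra.
Qed.
End Rect.

Lemma inhab_card (I : finType) : leq 1 #|I| -> exists i : I, True.
Proof. by case/card_gt0P => i _; exists i. Qed.

Theorem mainTheorem8 (T X Y : finType) (P : jdist T X Y) :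
  is_dist P ->
  is_true (leq (S #|T|) (minn #|X| #|Y|)) ->
  (exists Q, is_maximizer P Q /\ full_support Q) ->
  exists Q1 Q2, is_maximizer P Q1 /\ is_maximizer P Q2 /\ Q1 <> Q2.
Proof.
move=> _ hcard [Q [[hQP hmax] hQ]].
move: hcard; rewrite leq_min => /andP [hX hY].
have [t0 _] := T_inhab hQP.1.
have [x0 _] := inhab_card (leq_trans (ltn0Sn _) hX).
have [y0 _] := inhab_card (leq_trans (ltn0Sn _) hY).
set L := fun t x y => ln (Q t x y / margXY Q x y).
have hm x y : 0 < margXY Q x y := margXY_pos t0 x y hQ.
pose a := fun t x => exp (L t x y0).
pose b := fun t y => exp (L t x0 y - L t x0 y0).
have hab t x y : Q t x y = margXY Q x y * (a t x * b t y).
  have h1 : Q t x y / margXY Q x y = exp (L t x y).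
    by rewrite /L exp_ln //; apply: Rdiv_lt_0_compat.
  have h2 : L t x y = L t x y0 + (L t x0 y - L t x0 y0).
    have := rect (conj hQP hmax) hQ t x x0 y y0; rewrite /L /=; lra.
  rewrite /a /b -exp_plus -h2 -h1; field; have := hm x y; lra.
have ha t x : 0 < a t x by apply: exp_pos.
have hb t y : 0 < b t y by apply: exp_pos.
have [u [[xu hu] hu0]] := kernel_ex (fun t x => a t x) hX.
have [v [[yv hv] hv0]] := kernel_ex (fun t y => b t y) hY.
have hu0' t : rsum (fun x => u x * a t x) = 0 by exact: hu0.
have hv0' t : rsum (fun y => v y * b t y) = 0 by exact: hv0.
move/eqP: hu => hu; move/eqP: hv => hv.
pose D : jdist T X Y := fun t x y => u x * v y * (a t x * b t y).
have hz : zmarg D.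
  split=> [t x|t y].
    rewrite /margTX /D.
    transitivity (rsum (fun y => (u x * a t x) * (v y * b t y))).
      by apply: rsum_ext => y; ring.
    by rewrite rsum_scal hv0'; ring.
  rewrite /margTY /D.
  transitivity (rsum (fun x => (v y * b t y) * (u x * a t x))).
    by apply: rsum_ext => x; ring.
  by rewrite rsum_scal hu0'; ring.
have [d [hd hp]] := perturb hQP hQ hz.
set s := d / 2.
have hs : Rabs s < d by rewrite Rabs_pos_eq /s; lra.
have [hQ2P hQ2] := hp s hs.
have hsum x y : rsum (fun t => a t x * b t y) = 1.
  have h : margXY Q x y = margXY Q x y * rsum (fun t => a t x * b t y).
    by rewrite -rsum_scal {1}/margXY; apply: rsum_ext => t; rewrite hab.
  have := hm x y; nra.
have hmD x y : margXY D x y = u x * v y.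
  rewrite /margXY /D -[RHS]Rmult_1_r -(hsum x y) -rsum_scal.
  by apply: rsum_ext => t.
have hL t x y : ln (pert Q D s t x y / margXY (pert Q D s) x y) = L t x y.
  rewrite margXY_pert hmD /L; f_equal.
  have e1 : pert Q D s t x y = (margXY Q x y + s * (u x * v y)) * (a t x * b t y).
    by rewrite /pert /D hab; ring.
  have hne : margXY Q x y + s * (u x * v y) <> 0.
    move=> h0; have := hQ2 t x y; rewrite e1 h0; lra.
  rewrite e1 (hab t x y); field; split => //; have := hm x y; lra.
have Hent : condEntTXY (pert Q D s) = condEntTXY Q.
  rewrite !condEnt_pos //; f_equal.
  rewrite (rs3_ext (F := fun t x y => pert Q D s t x y *
        ln (pert Q D s t x y / margXY (pert Q D s) x y))
     (G := fun t x y => Q t x y * ln (Q t x y / margXY Q x y) +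
        s * (D t x y * ln (Q t x y / margXY Q x y)))).
    by rewrite rs3_plus rs3_scal (stat (conj hQP hmax) hQ hz); ring.
  by move=> t x y; rewrite hL /L /pert; ring.
exists Q, (pert Q D s); split; first by split.
split; first by split => // Q' hQ'; rewrite Hent; apply: hmax.
move=> E; have := congr1 (fun f => f t0 xu yv) E; rewrite /pert /D => h.
have : s * (u xu * v yv * (a t0 xu * b t0 yv)) <> 0.
  have h1 : s <> 0 by rewrite /s; lra.
  have h2 : a t0 xu <> 0 by have := ha t0 xu; lra.
  have h3 : b t0 yv <> 0 by have := hb t0 yv; lra.
  apply Rmult_integral_contrapositive_currified; [exact h1|]; repeat apply Rmult_integral_contrapositive_currified; assumption.
lra.
Qed.
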